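(* Let $X$ be a Tychonoff space such that $USC_p^f(X)$ is sequentially separable. Then $C_p(X)$ and $B_1(X)$ are sequentially separable.
   Context: A topological space $Z$ is sequentially separable if it has a countable subset $D$ such that every point of $Z$ is the limit of a sequence of elements of $D$. $C_p(X)$ is the set of continuous real-valued functions on $X$ with the topology of pointwise convergence; $B_1(X)$ is the set of pointwise limits of sequences of continuous real-valued functions on $X$ with the topology of pointwise convergence. A cozero-set of $X$ is a set of the form $\{x: g(x)\neq 0\}$ with $g$ continuous real-valued on $X$. $USC^f(X)=\{f\in\mathbb{R}^X : f^{-1}((-\infty,r)) \text{ is a cozero-set of } X \text{ for every } r\in\mathbb{R}\}$, and $USC_p^f(X)$ is this set with the topology of pointwise convergence. *)

(* Defs.v *)
From HB Require Import structures.
From mathcomp Require Import all_boot all_order all_algebra.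
From mathcomp Require Import all_classical all_reals all_analysis.

Import Order.TTheory GRing.Theory Num.Theory.
Import numFieldNormedType.Exports.
Local Open Scope classical_set_scope.
Local Open Scope ring_scope.

Definition tychonoff_space (X : topologicalType) : Prop :=
  completely_regular_space X /\ accessible_space X.

Definition seq_separable_subspace (T : topologicalType) (Z : set T) : Prop :=
  exists D : set T, D `<=` Z /\ countable D /\
    forall z, Z z -> exists u : nat -> subspace Z,
      (forall n, D (u n)) /\ (u @ \oo --> (z : subspace Z)).

Definition cozero_set (R : realType) (X : topologicalType) (A : set X) : Prop :=
  exists g : X -> R, continuous g /\ A = [set x | g x != 0].

Definition Cfun (R : realType) (X : topologicalType) : set (X -> R) :=
  [set f | continuous f].

Definition B1fun (R : realType) (X : topologicalType) : set (X -> R) :=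
  [set f | exists u : nat -> X -> R, (forall n, continuous (u n)) /\
      forall x, (fun n => u n x) @ \oo --> f x].

Definition USCf (R : realType) (X : topologicalType) : set (X -> R) :=
  [set f | forall r : R, cozero_set R X [set x | f x < r]].

(* Main.v *)
Require Import Defs.
From HB Require Import structures.
From mathcomp Require Import all_boot all_order all_algebra.
From mathcomp Require Import all_classical all_reals all_analysis.
From mathcomp Require Import lra.
Import Order.TTheory GRing.Theory Num.Theory.
Import numFieldNormedType.Exports.
Local Open Scope classical_set_scope.
Local Open Scope ring_scope.
Section PartA.
Context {R : realType} {X : topologicalType}.

Lemma sep_elim (Z : set (X -> R)) : seq_separable_subspace {ptws X -> R} Z ->
  exists D : set (X -> R), D `<=` Z /\ countable D /\
    forall f, Z f -> exists u : nat -> X -> R, (forall n, D (u n)) /\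
      forall x, (fun n => u n x) @ \oo --> f x.
Proof.
case=> D [DZ [cD H]]; exists D; split => //; split => // f Zf.
have [u [Du cu]] := H f Zf; exists u; split => // x.
have h1 := (@subspace_cvgP {ptws X -> R} Z (u @ \oo) f _ Zf).1 cu.
have cu' : u @ \oo --> (f : {ptws X -> R}).
  have h2 := (@cvg_within _ (nbhs (f : {ptws X -> R})) _ Z).
  exact: (cvg_trans (h1 _) (h2 _)).
by move/pointwise_cvgP : cu' => /(_ x).
Qed.

Lemma sep_intro (Z D : set (X -> R)) : D `<=` Z -> countable D ->
  (forall f, Z f -> exists u : nat -> X -> R, (forall n, D (u n)) /\
      forall x, (fun n => u n x) @ \oo --> f x) ->
  seq_separable_subspace {ptws X -> R} Z.
Proof.
move=> DZ cD H; exists D; split => //; split => // z Zz.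
have [u [Du cu]] := H z Zz; exists u; split => //.
apply/(@subspace_cvgP {ptws X -> R} Z (u @ \oo) z _ Zz).
have cu' : u @ \oo --> (z : {ptws X -> R}) by apply/pointwise_cvgP.
move=> P /= HP.
have := cu' _ HP.
move=> [N _ HN]; exists N => // n /HN; apply; exact/DZ/Du.
Qed.
End PartA.
Section Tool.
Context {R : realType} {X : topologicalType}.
Implicit Types f g : X -> R.

Lemma ct_cst (c : R) : continuous (fun _ : X => c).
Proof. by move=> x; apply: cvg_cst. Qed.
Lemma ct_add f g : continuous f -> continuous g -> continuous (fun x => f x + g x).
Proof. by move=> cf cg x; apply: cvgD; [exact: cf|exact: cg]. Qed.
Lemma ct_mul f g : continuous f -> continuous g -> continuous (fun x => f x * g x).
Proof. by move=> cf cg x; apply: cvgM; [exact: cf|exact: cg]. Qed.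
Lemma ct_opp f : continuous f -> continuous (fun x => - f x).
Proof. by move=> cf x; apply: cvgN; exact: cf. Qed.
Lemma ct_abs f : continuous f -> continuous (fun x => `|f x|).
Proof. by move=> cf x; apply: cvg_norm; exact: cf. Qed.
Lemma ct_max f g : continuous f -> continuous g -> continuous (fun x => Num.max (f x) (g x)).
Proof. by move=> cf cg x; apply: (@continuous_max R X f g x); [exact: cf|exact: cg]. Qed.
Lemma ct_min f g : continuous f -> continuous g -> continuous (fun x => Num.min (f x) (g x)).
Proof. by move=> cf cg x; apply: (@continuous_min R X f g x); [exact: cf|exact: cg]. Qed.
Lemma ct_sum n (F : nat -> X -> R) : (forall i, continuous (F i)) ->
  continuous (fun x => \sum_(i < n) F i x).
Proof.
move=> cF; elim: n => [|n IH].
  by under eq_fun => x do rewrite big_ord0; exact: ct_cst.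
under eq_fun => x do rewrite big_ord_recr /=; exact: ct_add.
Qed.
Lemma ct_prod n (F : nat -> X -> R) : (forall i, continuous (F i)) ->
  continuous (fun x => \prod_(i < n) F i x).
Proof.
move=> cF; elim: n => [|n IH].
  by under eq_fun => x do rewrite big_ord0; exact: ct_cst.
under eq_fun => x do rewrite big_ord_recr /=; exact: ct_mul.
Qed.

Lemma exists_small {e : R} : 0 < e -> exists n : nat, (2 ^+ n)^-1 < e.
Proof.
move=> e0; have ei : 0 <= e^-1 by rewrite invr_ge0 ltW.
have := archi_boundP ei; set n := Num.Def.archi_bound _ => hn.
exists n; rewrite invf_plt ?exprn_gt0 //.
apply: (lt_trans hn);   by rewrite -natrX ltr_nat; apply: ltn_expl.
by rewrite posrE exprn_gt0.
Qed.

Fixpoint Mx (b : nat -> X -> R) (n : nat) (x : X) : R :=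
  if n is n'.+1 then Num.max (Mx b n' x) (b n' x) else 0.

Lemma cozero_bigcup (h : nat -> X -> R) : (forall j, continuous (h j)) ->
  exists g : X -> R, continuous g /\ forall x, g x != 0 <-> exists j, h j x != 0.
Proof.
move=> ch.
pose w (j : nat) : R := (2 ^+ j)^-1.
have w0 j : 0 < w j by rewrite invr_gt0 exprn_gt0.
have w1 j : w j <= 1 by rewrite invf_le1 ?exprn_gt0 // exprn_ege1 // ler1n.
have wle i j : (i <= j)%N -> w j <= w i.
  by move=> ij; rewrite lef_pV2 ?posrE ?exprn_gt0 // ler_eXn2l // ltr1n.
pose b j x := Num.min (w j) `|h j x|.
have b0 j x : 0 <= b j x by rewrite le_min (ltW (w0 j)) normr_ge0.
have bw j x : b j x <= w j by rewrite ge_min lexx.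
pose G x := sup (range (fun j => b j x)).
have ubG x : has_ubound (range (fun j => b j x)).
  by exists 1 => _ [j _ <-]; exact: le_trans (bw j x) (w1 j).
have bG j x : b j x <= G x by apply: ub_le_sup (ubG x) _ _; exists j.
have M0 n x : 0 <= Mx b n x.
  by elim: n => [//|n IH] /=; rewrite le_max IH.
have bM j n x : (j < n)%N -> b j x <= Mx b n x.
  elim: n => [//|n IH]; rewrite ltnS leq_eqVlt => /orP[/eqP->|jn] /=.
    by rewrite le_max lexx orbT.
  by rewrite le_max IH.
have MG n x : Mx b n x <= G x.
  elim: n => [|n IH] /=; first exact: le_trans (b0 0%N x) (bG 0%N x).
  by rewrite ge_max IH bG.
have GM n x : G x <= Mx b n x + w n.
  apply: ge_sup; first by exists (b 0%N x), 0%N.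
  move=> _ [j _ <-]; case: (ltnP j n) => jn.
    by apply: le_trans (bM j n x jn) _; rewrite lerDl ltW.
  apply: le_trans (bw j x) _; apply: le_trans (wle _ _ jn) _.
  by rewrite lerDr.
have cb j : continuous (b j) by apply: ct_min; [exact: ct_cst|exact: ct_abs].
have cM n : continuous (Mx b n).
  elim: n => [|n IH] /=; first exact: ct_cst.
  exact: ct_max.
exists G; split.
  move=> x; apply/cvgrPdist_lt => e e0.
  have e30 : 0 < e / 3 by rewrite divr_gt0.
  have [n hn] := exists_small e30.
  have H := (cvgrPdist_lt _ _).1 (cM n x) (e/3) e30.
  near=> y.
  have hy : `|Mx b n x - Mx b n y| < e / 3 by near: y; exact: H.
  have := MG n x; have := GM n x; have := MG n y; have := GM n y.
  rewrite -/(w n) in hn.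
  move: hy; rewrite /= ltr_norml => /andP[hy1 hy2] a1 a2 a3 a4.
  have hw : w n <= e / 3 by exact: ltW.
  rewrite ltr_norml; apply/andP; split; lra.
move=> x; split.
  apply: contraNP => /forallNP hj.
  have bz j : b j x = 0.
    have := hj j; move/negP; rewrite negbK => /eqP hj0.
    by rewrite /b hj0 normr0; apply/min_idPr; exact: ltW (w0 j).
  apply/eqP; apply: le_anti; apply/andP; split.
    apply: ge_sup; first by exists (b 0%N x), 0%N.
    by move=> _ [j _ <-]; rewrite bz.
  by rewrite -(bz 0%N); exact: bG.
move=> [j hj]; rewrite gt_eqF //; apply: lt_le_trans (bG j x).
by rewrite /b lt_min w0 normr_gt0.
Unshelve. all: end_near.
Qed.
End Tool.
Section PartD.
Context {R : realType} {X : topologicalType}.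

Lemma cozero0 : cozero_set R X set0.
Proof. by exists (fun _ => 0); split; [exact: ct_cst|apply/seteqP; split => x //=; rewrite eqxx]. Qed.
Lemma cozeroT : cozero_set R X setT.
Proof. by exists (fun _ => 1); split; [exact: ct_cst|apply/seteqP; split => x //=; rewrite oner_eq0]. Qed.

Lemma factA (e : nat -> X -> R) (gw : nat -> X -> R)
  (hgw : forall j x, (e j x < 2^-1) <-> gw j x != 0)
  (dense : forall f, USCf R X f -> exists s : nat -> nat,
      forall x, (fun k => e (s k) x) @ \oo --> f x)
  (S : set X) : cozero_set R X (~` S) ->
  exists s : nat -> nat, forall x, S x <-> exists N, forall k, gw (s (N + k)%N) x = 0.
Proof.
move=> cS.
pose t x : R := if pselect (S x) then 1 else 0.
have tU : USCf R X t.
  move=> r /=; case: (ltP 0 r) => r0; last first.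
    suff -> : [set x | t x < r] = set0 by exact: cozero0.
    apply/seteqP; split => x //=; rewrite /t. case: (pselect (S x)) => hS /=.
      by move=> h; have := lt_le_trans h r0; rewrite ltr10.
    by rewrite ltNge r0.
  case: (ltP 1 r) => r1.
    suff -> : [set x | t x < r] = setT by exact: cozeroT.
    apply/seteqP; split => x //= _; rewrite /t; case: (pselect (S x)) => hS /= //.
  suff -> : [set x | t x < r] = ~` S by exact: cS.
  apply/seteqP; split => x /=; rewrite /t; case: (pselect (S x)) => hS /=.
  - by rewrite ltNge r1.
  - by [].
  - by [].
  - by move=> _.
have [s hs] := dense t tU.
have h2 : (0 : R) < 2^-1 by rewrite invr_gt0.
exists s => x; split.
  move=> Sx; have := (cvgrPdist_lt _ _).1 (hs x) _ h2.
  rewrite /t; case: (pselect (S x)) => // hS [N _ HN]; exists N => k.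
  have /= := HN (N + k)%N (leq_addr _ _).
  move=> h; have [//|hne] := eqVneq (gw (s (N + k)%N) x) 0.
  have hl := (hgw _ _).2 hne.
  exfalso; move: h; rewrite ltr_norml => /andP[_ h']; lra.
move=> [N HN]; apply: contrapT => nSx.
have := (cvgrPdist_lt _ _).1 (hs x) _ h2.
rewrite /t; case: (pselect (S x)) => // hS [M _ HM].
have /= := HM (N + M)%N (leq_addl _ _).
rewrite sub0r normrN => h.
have : e (s (N + M)%N) x < 2^-1 by apply: le_lt_trans (ler_norm _) h.
by move/(hgw _ _); rewrite HN eqxx.
Qed.
End PartD.
Definition rr {R : realType} (m : nat) : R := (2 ^+ m)^-1.
Definition gam {R : realType} {X : Type} (G : nat -> X -> R) (n : nat) (c : nat -> nat) (x : X) : R :=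
  Num.max 0 (1 - n%:R * \sum_(k < n) `|G (c k) x|).
Definition Lsel {R : realType} {X : Type} (G : nat -> X -> R) (n : nat) (lab : nat -> int)
  (cd : nat -> nat -> nat) (m : nat) (x : X) : R :=
  \sum_(i < n) ((lab i)%:~R * rr m) * (gam G n (cd i) x * \prod_(j < i) (1 - gam G n (cd j) x)).
Definition clamp {R : realType} (c t : R) : R := Num.max (- c) (Num.min c t).
Definition Psi {R : realType} {X : Type} (G : nat -> X -> R) (n : nat) (lab : nat -> nat -> int)
  (cd : nat -> nat -> nat -> nat) (x : X) : R :=
  Lsel G n (lab 0%N) (cd 0%N) 0 x + \sum_(m < n) clamp (3 * rr m.+1)
     (Lsel G n (lab m.+1) (cd m.+1) m.+1 x - Lsel G n (lab m) (cd m) m x).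

Section PartF.
Context {R : realType} {X : topologicalType}.
Variable G : nat -> X -> R.
Hypothesis cG : forall j, continuous (G j).

Lemma gam_cont n c : continuous (gam G n c).
Proof.
apply: ct_max; first exact: ct_cst.
apply: ct_add; first exact: ct_cst.
apply: (@ct_opp _ _ (fun x => n%:R * \sum_(k < n) `|G (c k) x|)).
apply: ct_mul; first exact: ct_cst.
by apply: (ct_sum _ (fun k x => `|G (c k) x|)) => k; apply: ct_abs.
Qed.

Lemma Lsel_cont n lab cd m : continuous (Lsel G n lab cd m).
Proof.
apply: (ct_sum _ (fun i x => ((lab i)%:~R * rr m) * (gam G n (cd i) x * \prod_(j < i) (1 - gam G n (cd j) x)))) => i.
apply: ct_mul; first exact: ct_cst.
apply: ct_mul; first exact: gam_cont.
apply: (ct_prod _ (fun j x => 1 - gam G n (cd j) x)) => j; apply: ct_add; first exact: ct_cst.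
by apply: (@ct_opp _ _ (gam G n (cd j))); exact: gam_cont.
Qed.

Lemma Psi_cont n lab cd : continuous (Psi G n lab cd).
Proof.
apply: ct_add; first exact: Lsel_cont.
apply: (ct_sum _ (fun m x => clamp (3 * rr m.+1)
     (Lsel G n (lab m.+1) (cd m.+1) m.+1 x - Lsel G n (lab m) (cd m) m x))) => m.
apply: ct_max; first exact: ct_cst.
apply: ct_min; first exact: ct_cst.
apply: ct_add; first exact: Lsel_cont.
by apply: (@ct_opp _ _ (Lsel G n (lab m) (cd m) m)); exact: Lsel_cont.
Qed.

Lemma gam_one n c x : (forall k, G (c k) x = 0) -> gam G n c x = 1.
Proof.
move=> h; rewrite /gam big1 ?mulr0 ?subr0; last by move=> k _; rewrite h normr0.
by apply/max_idPr; rewrite ler01.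
Qed.

Lemma gam_zero c x : (exists k, G (c k) x != 0) ->
  exists N, forall n, (N <= n)%N -> gam G n c x = 0.
Proof.
move=> [k hk]; set a := `|G (c k) x|.
have a0 : 0 < a by rewrite normr_gt0.
have ai : 0 <= a^-1 by rewrite invr_ge0 ltW.
exists (maxn k.+1 (Num.Def.archi_bound a^-1)) => n.
rewrite geq_max => /andP[kn bn].
rewrite /gam; apply/max_idPl.
rewrite subr_le0.
have h1 : a <= \sum_(k0 < n) `|G (c k0) x|.
  rewrite (bigD1 (Ordinal kn)) //= lerDl.
  by apply: sumr_ge0 => i _; exact: normr_ge0.
have h2 : a^-1 <= n%:R.
  apply: ltW; apply: lt_le_trans (archi_boundP ai) _.
  by rewrite ler_nat.
have h3 : 1 <= n%:R * a.
  have ha : a^-1 * a = 1 := mulVf (lt0r_neq0 a0).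
  by have := ler_wpM2r (ltW a0) h2; rewrite ha.
apply: (le_trans h3); apply: ler_wpM2l => //.
Qed.

Lemma gam_zero_all (cd : nat -> nat -> nat) x i0 :
  (forall j, (j < i0)%N -> exists k, G (cd j k) x != 0) ->
  exists N, forall n, (N <= n)%N -> forall j, (j < i0)%N -> gam G n (cd j) x = 0.
Proof.
elim: i0 => [|i IH] h; first by exists 0%N.
have [N1 H1] := IH (fun j ji => h j (ltnW ji)).
have [N2 H2] := gam_zero (cd i) x (h i (ltnSn i)).
exists (maxn N1 N2) => n; rewrite geq_max => /andP[n1 n2] j.
rewrite ltnS leq_eqVlt => /orP[/eqP->|ji]; first exact: H2.
exact: H1.
Qed.

Lemma Lsel_ev lab cd m x i0 : (forall k, G (cd i0 k) x = 0) ->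
  (forall j, (j < i0)%N -> exists k, G (cd j k) x != 0) ->
  exists N, forall n, (N <= n)%N -> Lsel G n lab cd m x = (lab i0)%:~R * rr m.
Proof.
move=> h0 hj; have [N HN] := gam_zero_all cd x i0 hj.
exists (maxn N i0.+1) => n; rewrite geq_max => /andP[Nn i0n].
rewrite /Lsel (bigD1 (Ordinal i0n)) //= gam_one // mul1r.
rewrite big1; last by move=> j _; rewrite HN // subr0.
rewrite mulr1 big1 ?addr0 // => i /eqP hi.
have [ii0|i0i] := ltnP i i0.
  by rewrite HN // mul0r mulr0.
have i0i' : (i0 < i)%N.
  rewrite ltn_neqAle i0i andbT; apply/eqP => e; apply: hi.
  by apply: val_inj => /=.
rewrite (bigD1 (Ordinal i0i')) //= (gam_one n (cd i0) x h0) subrr mul0r.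
by rewrite mulr0 mulr0.
Qed.
End PartF.
Section PartF2.
Context {R : realType} {X : topologicalType}.

Lemma rr_gt0 m : (0 : R) < rr m.
Proof. by rewrite /rr invr_gt0 exprn_gt0. Qed.

Lemma rrS m : (rr m.+1 : R) = rr m / 2.
Proof. by rewrite /rr exprSr invfM. Qed.

Lemma clamp_id (c t : R) : `|t| <= c -> clamp c t = t.
Proof.
rewrite ler_norml => /andP[h1 h2]; rewrite /clamp.
have -> : Num.min c t = t by apply/min_idPr.
by apply/max_idPr.
Qed.

Lemma clamp_bd (c t : R) : 0 <= c -> `|clamp c t| <= c.
Proof.
move=> c0; rewrite /clamp ler_norml; apply/andP; split.
  by rewrite le_max lexx.
rewrite ge_max; apply/andP; split; first lra.
by rewrite ge_min lexx.
Qed.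

Lemma geo_sum M d : \sum_(M <= m < M + d) (rr m.+1 : R) = rr M - rr (M + d).
Proof.
elim: d => [|d IH]; first by rewrite addn0 big_geq // subrr.
rewrite addnS big_nat_recr /=; last exact: leq_addr.
rewrite IH (rrS (M + d)).
set a := rr (M + d); lra.
Qed.

Lemma geo_le M n : \sum_(M <= m < n) (rr m.+1 : R) <= rr M.
Proof.
case: (leqP n M) => nM; first by rewrite big_geq // ltW // rr_gt0.
rewrite -(subnKC (ltnW nM)) geo_sum gerBl; exact/ltW/rr_gt0.
Qed.

Variable G : nat -> X -> R.

Lemma Psi_cvg (lab : nat -> nat -> int) (cd : nat -> nat -> nat -> nat) (f : X -> R) x :
  (forall m, exists i, forall k, G (cd m i k) x = 0) ->
  (forall m i, (forall k, G (cd m i k) x = 0) -> `|f x - (lab m i)%:~R * rr m| <= rr m) ->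
  (fun n => Psi G n lab cd x) @ \oo --> f x.
Proof.
move=> cov lbl.
have hN : forall m, exists Nl : nat * R, `|f x - Nl.2| <= rr m /\
    forall n, (Nl.1 <= n)%N -> Lsel G n (lab m) (cd m) m x = Nl.2.
  move=> m.
  have ex : exists i, (fun i => `[< forall k, G (cd m i k) x = 0 >]) i.
    by have [i hi] := cov m; exists i; apply/asboolP.
  case: (ex_minnP ex) => i0 /asboolP h0 hmin.
  have hj : forall j, (j < i0)%N -> exists k, G (cd m j k) x != 0.
    move=> j ji; apply: contrapT => /forallNP hk.
    have : (i0 <= j)%N.
      apply: hmin; apply/asboolP => k; have := hk k.
      by move/negP; rewrite negbK => /eqP.
    by rewrite leqNgt ji.
  have [N HN] := Lsel_ev G (lab m) (cd m) m x i0 h0 hj.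
  by exists (N, (lab m i0)%:~R * rr m); split => //; exact: lbl.
have [Nl HNl] := choice hN.
pose lam m := (Nl m).2.
apply/cvgrPdist_le => e e0.
have e4 : 0 < e / 4 by rewrite divr_gt0.
have [M hM] := exists_small e4.
rewrite -/(rr M) in hM.
exists (maxn M.+1 (\max_(m < M.+2) (Nl m).1)) => // n /=.
rewrite geq_max => /andP[Mn Nn].
have Lm : forall m, (m <= M.+1)%N -> Lsel G n (lab m) (cd m) m x = lam m.
  move=> m mM; apply: (HNl m).2; apply: leq_trans Nn.
  by have := @leq_bigmax 'I_M.+2 (fun i => (Nl i).1) (Ordinal (mM : (m < M.+2)%N)).
have lamb : forall m, `|f x - lam m| <= rr m by move=> m; exact: (HNl m).1.
rewrite /Psi -(big_mkord xpredT (fun m => clamp (3 * rr m.+1)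
     (Lsel G n (lab m.+1) (cd m.+1) m.+1 x - Lsel G n (lab m) (cd m) m x))).
rewrite (big_cat_nat (leq0n M) (ltnW Mn)) /=.
rewrite (eq_big_nat _ _ (F2 := fun m => lam m.+1 - lam m)); last first.
  move=> m /andP[_ mM]; rewrite (Lm m.+1 (ltnW mM)) (Lm m (ltnW (leqW mM))).
  apply: clamp_id.
  have := lamb m; have := lamb m.+1; rewrite (rrS m).
  set a := f x; set b := lam m; set c := lam m.+1; set r := rr m.
  move=> h1 h2.
  have -> : c - b = (a - b) - (a - c) by lra.
  apply: le_trans (ler_normB _ _) _; lra.
rewrite telescope_sumr // Lm //.
set rest := \sum_(M <= i < n) _.
have hrest : `|rest| <= 3 * rr M.
  apply: (le_trans (ler_norm_sum _ _ _)).
  apply: (@le_trans _ _ (\sum_(M <= i < n) 3 * rr i.+1 : R)).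
    apply: ler_sum => i _; apply: clamp_bd.
    by rewrite mulr_ge0 // ltW // rr_gt0.
  by rewrite -mulr_sumr ler_wpM2l // geo_le.
have := lamb M.
set a := f x; set b := lam M; set r := rr M.
have r0 : 0 < r by exact: rr_gt0.
move=> h1.
have -> : a - (lam 0%N + (b - lam 0%N + rest)) = (a - b) - rest by lra.
apply: (le_trans (ler_normB _ _)).
have : r < e / 4 by exact: hM.
lra.
Qed.
End PartF2.
Definition labOf (dat : seq (seq (int * seq nat))) (m i : nat) : int :=
  (nth (0%Z, [::]) (nth [::] dat m) i).1.
Definition cdOf (dat : seq (seq (int * seq nat))) (m i k : nat) : nat :=
  nth 0%N (nth (0%Z, [::]) (nth [::] dat m) i).2 k.
Definition datOf (n : nat) (lab : nat -> nat -> int) (cd : nat -> nat -> nat -> nat) :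
  seq (seq (int * seq nat)) :=
  mkseq (fun m => mkseq (fun i => (lab m i, mkseq (cd m i) n)) n) n.+1.

Section PartG.
Context {R : realType} {X : topologicalType}.
Variable G : nat -> X -> R.

Lemma gam_ext n c c' x : (forall k, (k < n)%N -> c k = c' k) -> gam G n c x = gam G n c' x.
Proof. by move=> h; rewrite /gam; congr (Num.max 0 (1 - _ * _)); apply: eq_bigr => k _; rewrite h. Qed.

Lemma Lsel_ext n lab lab' cd cd' m x :
  (forall i, (i < n)%N -> lab i = lab' i) ->
  (forall i k, (i < n)%N -> (k < n)%N -> cd i k = cd' i k) ->
  Lsel G n lab cd m x = Lsel G n lab' cd' m x.
Proof.
move=> hl hc; rewrite /Lsel; apply: eq_bigr => i _.
rewrite hl // (gam_ext n (cd i) (cd' i) x); last by move=> k kn; rewrite hc.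
congr (_ * (_ * _)); apply: eq_bigr => j _.
rewrite (gam_ext n (cd j) (cd' j) x) // => k kn; rewrite hc //.
exact: ltn_trans (ltn_ord j) (ltn_ord i).
Qed.

Lemma Psi_dat n lab cd : Psi G n lab cd = Psi G n (labOf (datOf n lab cd)) (cdOf (datOf n lab cd)).
Proof.
have hl : forall m i, (m <= n)%N -> (i < n)%N -> lab m i = labOf (datOf n lab cd) m i.
  by move=> m i mn i_n; rewrite /labOf /datOf nth_mkseq // nth_mkseq.
have hc : forall m i k, (m <= n)%N -> (i < n)%N -> (k < n)%N -> cd m i k = cdOf (datOf n lab cd) m i k.
  by move=> m i k mn i_n kn; rewrite /cdOf /datOf nth_mkseq // nth_mkseq //= nth_mkseq.
apply: funext => x; rewrite /Psi.
rewrite (Lsel_ext n (lab 0%N) (labOf (datOf n lab cd) 0%N) (cd 0%N) (cdOf (datOf n lab cd) 0%N)); last 2 first.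
- by move=> i i_n; apply: hl.
- by move=> i k i_n kn; apply: hc.
congr (_ + _); apply: eq_bigr => m _.
rewrite (Lsel_ext n (lab m.+1) (labOf (datOf n lab cd) m.+1) (cd m.+1) (cdOf (datOf n lab cd) m.+1)); last 2 first.
- by move=> i i_n; apply: hl.
- by move=> i k i_n kn; apply: hc.
rewrite (Lsel_ext n (lab m) (labOf (datOf n lab cd) m) (cd m) (cdOf (datOf n lab cd) m)) //.
- by move=> i i_n; apply: hl => //; exact: ltnW.
- by move=> i k i_n kn; apply: hc => //; exact: ltnW.
Qed.

Definition Dp : set (X -> R) :=
  range (fun p : nat * seq (seq (int * seq nat)) => Psi G p.1 (labOf p.2) (cdOf p.2)).

Lemma Dp_countable : countable Dp.
Proof. exact: sub_countable (card_image_le _ _) (countableP _). Qed.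

Lemma Dp_in n lab cd : Dp (Psi G n lab cd).
Proof. by exists (n, datOf n lab cd) => //; exact: (esym (Psi_dat n lab cd)). Qed.
End PartG.
Section PartH.
Context {R : realType} {X : topologicalType}.

Lemma B1_approx (e gw : nat -> X -> R) (cgw : forall j, continuous (gw j))
  (hgw : forall j x, (e j x < 2^-1) <-> gw j x != 0)
  (dense : forall f, USCf R X f -> exists s : nat -> nat,
      forall x, (fun k => e (s k) x) @ \oo --> f x)
  (f : X -> R) : B1fun R X f ->
  exists u : nat -> X -> R, (forall n, Dp gw (u n)) /\
    forall x, (fun n => u n x) @ \oo --> f x.
Proof.
case=> phi [cphi hphi].
pose S (t : nat * int * nat) : set X := [set x | forall j, (t.2 <= j)%N ->
   `|phi j x - t.1.2%:~R * rr t.1.1| <= rr t.1.1].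
have cS t : cozero_set R X (~` S t).
  pose h j x := if (t.2 <= j)%N then Num.max 0 (`|phi j x - t.1.2%:~R * rr t.1.1| - rr t.1.1) else 0.
  have ch j : continuous (h j).
    rewrite /h; case: (t.2 <= j)%N; last exact: ct_cst.
    apply: ct_max; first exact: ct_cst.
    apply: ct_add; last exact: ct_cst.
    apply: (@ct_abs _ _ (fun x => phi j x - t.1.2%:~R * rr t.1.1)).
    by apply: ct_add; [exact: cphi|exact: ct_cst].
  have [g [cg hg]] := cozero_bigcup h ch.
  exists g; split => //; apply/seteqP; split => x /=.
    move=> nS; apply/hg.
    have [j /not_implyP [Jj hj]] : exists j, ~ ((t.2 <= j)%N ->
        `|phi j x - t.1.2%:~R * rr t.1.1| <= rr t.1.1).
      by apply/existsNP.
    exists j; rewrite /h Jj; apply/negP => /eqP /max_idPl.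
    by rewrite subr_le0 => /hj.
  move=> /hg [j]; rewrite /h; case: ifP => [Jj hj Sx|_]; last by rewrite eqxx.
  have := Sx j Jj; rewrite -subr_le0 => h0.
  have h1 : Num.max 0 (`|phi j x - t.1.2%:~R * rr t.1.1| - rr t.1.1) = 0.
    by apply/max_idPl.
  by move: hj; rewrite h1 eqxx.
have hs (t0 : nat * int * nat) : exists s : nat -> nat, forall x, S t0 x <-> exists N, forall k, gw (s (N + k)%N) x = 0.
  exact: (factA _ _ hgw dense _ (cS t0)).
have [sig hsig] := choice hs.
pose dec i : int * nat * nat := odflt (0%Z, 0%N, 0%N) (unpickle i).
pose lab (m i : nat) : int := (dec i).1.1.
pose cd (m i k : nat) : nat := sig (m, (dec i).1.1, (dec i).1.2) ((dec i).2 + k)%N.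
exists (fun n => Psi gw n lab cd); split; first by move=> n; exact: Dp_in.
move=> x; apply: Psi_cvg.
- move=> m; pose r : R := rr m.
  have r0 : 0 < r by exact: rr_gt0.
  pose z := Num.floor (f x / r).
  have /andP[hz1 hz2] := mem_rg1_floor (f x / r).
  rewrite -/z ler_pdivlMr // in hz1.
  rewrite -/z ltr_pdivrMr // mulrDl mul1r in hz2.
  have hd : 0 < r - (f x - z%:~R * r) by lra.
  have [J _ HJ] := (cvgrPdist_lt _ _).1 (hphi x) _ hd.
  have Sx : S (m, z, J) x.
    move=> j /= Jj; have := HJ j Jj; rewrite /= -/r.
    rewrite ltr_norml ler_norml => /andP[h1 h2]; apply/andP; split; lra.
  have [N HN] := (hsig (m, z, J) x).1 Sx.
  exists (pickle (z, J, N)) => k.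
  by rewrite /cd /dec pickleK /=; exact: HN.
- move=> m i hT.
  pose t := (m, (dec i).1.1, (dec i).1.2).
  have St : S t x by apply/(hsig t x).2; exists (dec i).2.
  have cv : (fun j => `|phi j x - (lab m i)%:~R * rr m|) @ \oo -->
      `|f x - (lab m i)%:~R * rr m|.
    by apply: cvg_norm; apply: cvgB; [exact: hphi|exact: cvg_cst].
  apply: (cvgr_to_le cv); exists (dec i).1.2 => // j /= hj.
Qed.
End PartH.
Lemma cst_USCf {R : realType} {X : topologicalType} (c : R) : USCf R X (fun _ => c).
Proof.
move=> r; case: (ltP c r) => cr.
  exists (fun _ => 1); split; first exact: ct_cst.
  by apply/seteqP; split => x /= _; [exact: oner_neq0|].
exists (fun _ => 0); split; first exact: ct_cst.
by apply/seteqP; split => x //=; rewrite eqxx.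
Qed.

Lemma cont_B1 {R : realType} {X : topologicalType} (f : X -> R) : continuous f -> B1fun R X f.
Proof. by move=> cf; exists (fun _ => f); split => // x; exact: cvg_cst. Qed.

Theorem corollary3p3 (R : realType) (X : topologicalType) :
  tychonoff_space X ->
  seq_separable_subspace {ptws X -> R} (USCf R X) ->
  seq_separable_subspace {ptws X -> R} (Cfun R X) /\
  seq_separable_subspace {ptws X -> R} (B1fun R X).
Proof.
move=> _ hU.
have [D [DU [cD dens]]] := sep_elim _ hU.
have [u0 [Du0 _]] := dens _ (@cst_USCf R X 0).
have [e De] : exists e : nat -> X -> R, D = range e.
  case/pfcard_geP: cD => [D0|/surjfunPex [e De]]; last by exists e.
  by move: (Du0 0%N); rewrite D0.
have eU j : USCf R X (e j) by apply: DU; rewrite De; exists j.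
have dense : forall f, USCf R X f -> exists s : nat -> nat,
    forall x, (fun k => e (s k) x) @ \oo --> f x.
  move=> f /dens [u [Du hu]].
  have hs n : exists j, e j = u n.
    by have := Du n; rewrite De => -[j _ <-]; exists j.
  have [s hs'] := choice hs; exists s => x.
  have -> : (fun k => e (s k) x) = (fun k => u k x) by apply: funext => k; rewrite hs'.
  exact: hu.
have hg j : exists g : X -> R, continuous g /\ forall x, (e j x < 2^-1) <-> g x != 0.
  have [g [cg hg]] := eU j 2^-1.
  exists g; split => // x.
  by have := congr1 (fun A : set X => A x) hg => /= ->.
have [gw hgw] := choice hg.
have cgw j : continuous (gw j) by case: (hgw j).
have hgw' j x : (e j x < 2^-1) <-> gw j x != 0 by case: (hgw j).
have DpC : Dp gw `<=` Cfun R X by move=> _ [p _ <-]; exact: Psi_cont.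
split.
- apply: (sep_intro _ _ DpC (Dp_countable gw)) => f cf.
  exact: (B1_approx e gw cgw hgw' dense f (cont_B1 _ cf)).
- apply: (sep_intro _ _ (fun h Dh => cont_B1 _ (DpC h Dh)) (Dp_countable gw)) => f.
  exact: (B1_approx e gw cgw hgw' dense f).
Qed.
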